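(* Let $\Sigma$ be a finite set of disjunctive embedded dependencies over a signature $\tau$. (a) $\Sigma$ is equivalent to a finite set of embedded dependencies iff $\Sigma$ is preserved under direct products (for all $\tau$-structures $\mathcal{A},\mathcal{B}$ that are models of $\Sigma$, $\mathcal{A}\times\mathcal{B}$ is a model of $\Sigma$). (b) $\Sigma$ is equivalent over finite structures to a finite set of embedded dependencies iff $\Sigma$ is preserved under direct products in the finite (for all finite models $\mathcal{A},\mathcal{B}$ of $\Sigma$, $\mathcal{A}\times\mathcal{B}$ is a model of $\Sigma$).
   Context: Signatures are relational (constant and relation symbols). A generalized dependency is a sentence $\forall\vec{x}(\phi(\vec{x})\rightarrow\exists\vec{y}(\psi_1\vee\cdots\vee\psi_n))$, $n\ge0$, with $\phi,\psi_i$ conjunctions of atomic formulas (equalities allowed). It is safe if every universal variable occurring in the head occurs in some relational atom of the body. A disjunctive embedded dependency (DED) is a safe generalized dependency with $n\ge1$; an embedded dependency (ED) is a DED with $n=1$. The direct product $\mathcal{A}\times\mathcal{B}$ has domain $A\times B$, interprets each constant $c$ as $\langle c^{\mathcal A},c^{\mathcal B}\rangle$, and for each $k$-ary relation symbol $R$, $(\langle a_1,b_1\rangle,\dots,\langle a_k,b_k\rangle)\in R^{\mathcal{A}\times\mathcal{B}}$ iff $(a_1,\dots,a_k)\in R^{\mathcal A}$ and $(b_1,\dots,b_k)\in R^{\mathcal B}$. *)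

(* Defs.v *)
From Stdlib Require Import List.
Import ListNotations.

Set Implicit Arguments.

Record signature := Signature {
  const_sym : Type;
  rel_sym : Type;
  arity : rel_sym -> nat }.

Inductive term (S : signature) : Type :=
| TVar (x : nat)
| TConst (c : const_sym S).
Arguments TVar {S} x.
Arguments TConst {S} c.

Inductive atom (S : signature) : Type :=
| AEq (t1 t2 : term S)
| ARel (r : rel_sym S) (ts : list (term S)).
Arguments AEq {S} t1 t2.
Arguments ARel {S} r ts.

Definition term_vars {S} (t : term S) : list nat :=
  match t with TVar x => [x] | TConst _ => [] end.

Definition atom_vars {S} (a : atom S) : list nat :=
  match a with
  | AEq t1 t2 => term_vars t1 ++ term_vars t2
  | ARel _ ts => flat_map term_vars ts
  end.

Definition rel_atom_vars {S} (a : atom S) : list nat :=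
  match a with
  | AEq _ _ => []
  | ARel _ ts => flat_map term_vars ts
  end.

Definition atom_wf {S} (a : atom S) : Prop :=
  match a with
  | AEq _ _ => True
  | ARel r ts => length ts = arity S r
  end.

(** A generalized dependency
      forall uvars, (/\ body) -> exists evars, \/_{psi in heads} (/\ psi). *)
Record dependency (S : signature) := Dependency {
  uvars : list nat;
  evars : list nat;
  body : list (atom S);
  heads : list (list (atom S)) }.

Definition dep_wf {S} (d : dependency S) : Prop :=
  (forall a, In a (body d) -> atom_wf a) /\
  (forall psi a, In psi (heads d) -> In a psi -> atom_wf a) /\
  (forall x, In x (uvars d) -> ~ In x (evars d)) /\
  (forall a x, In a (body d) -> In x (atom_vars a) -> In x (uvars d)) /\
  (forall psi a x, In psi (heads d) -> In a psi -> In x (atom_vars a) ->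
     In x (uvars d) \/ In x (evars d)).

Definition dep_safe {S} (d : dependency S) : Prop :=
  forall psi a x, In psi (heads d) -> In a psi -> In x (atom_vars a) ->
    In x (uvars d) ->
    exists b, In b (body d) /\ In x (rel_atom_vars b).

Definition is_DED {S} (d : dependency S) : Prop :=
  dep_wf d /\ dep_safe d /\ heads d <> [].

Definition is_ED {S} (d : dependency S) : Prop :=
  is_DED d /\ length (heads d) = 1.

Record structure (S : signature) := Structure {
  dom : Type;
  dom_inhabited : inhabited dom;
  cinterp : const_sym S -> dom;
  rinterp : rel_sym S -> list dom -> Prop;
  rinterp_arity : forall r l, rinterp r l -> length l = arity S r }.
Arguments dom {S} _.
Arguments cinterp {S} _ _.
Arguments rinterp {S} _ _ _.

Definition finite_structure {S} (A : structure S) : Prop :=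
  exists l : list (dom A), forall x, In x l.

Definition eval_term {S} (A : structure S) (v : nat -> dom A) (t : term S)
  : dom A :=
  match t with TVar x => v x | TConst c => cinterp A c end.

Definition holds {S} (A : structure S) (v : nat -> dom A) (a : atom S) : Prop :=
  match a with
  | AEq t1 t2 => eval_term A v t1 = eval_term A v t2
  | ARel r ts => rinterp A r (map (eval_term A v) ts)
  end.

Definition holds_conj {S} (A : structure S) (v : nat -> dom A)
  (phi : list (atom S)) : Prop :=
  forall a, In a phi -> holds A v a.

Definition satisfies {S} (A : structure S) (d : dependency S) : Prop :=
  forall v : nat -> dom A,
    holds_conj A v (body d) ->
    exists v' : nat -> dom A,
      (forall x, ~ In x (evars d) -> v' x = v x) /\
      exists psi, In psi (heads d) /\ holds_conj A v' psi.

Definition model {S} (A : structure S) (Sigma : list (dependency S)) : Prop :=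
  forall d, In d Sigma -> satisfies A d.

Definition equivalent {S} (Sigma1 Sigma2 : list (dependency S)) : Prop :=
  forall A : structure S, model A Sigma1 <-> model A Sigma2.

Definition fin_equivalent {S} (Sigma1 Sigma2 : list (dependency S)) : Prop :=
  forall A : structure S, finite_structure A ->
    (model A Sigma1 <-> model A Sigma2).

Lemma prod_rinterp_arity {S} (A B : structure S) (r : rel_sym S)
  (l : list (dom A * dom B)) :
  rinterp A r (map fst l) /\ rinterp B r (map snd l) -> length l = arity S r.
Proof.
  intros [HA _]. rewrite <- (length_map fst l). exact (rinterp_arity _ _ _ HA).
Qed.

Definition prod_structure {S} (A B : structure S) : structure S :=
  {| dom := (dom A * dom B)%type;
     dom_inhabited :=
       match dom_inhabited A, dom_inhabited B with
       | inhabits a, inhabits b => inhabits (a, b) end;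
     cinterp := fun c => (cinterp A c, cinterp B c);
     rinterp := fun r l => rinterp A r (map fst l) /\ rinterp B r (map snd l);
     rinterp_arity := @prod_rinterp_arity S A B |}.

Definition preserved_under_products {S} (Sigma : list (dependency S)) : Prop :=
  forall A B : structure S, model A Sigma -> model B Sigma ->
    model (prod_structure A B) Sigma.

Definition preserved_under_products_fin {S} (Sigma : list (dependency S))
  : Prop :=
  forall A B : structure S, finite_structure A -> finite_structure B ->
    model A Sigma -> model B Sigma -> model (prod_structure A B) Sigma.

(* Main.v *)
Require Import Defs.
From Stdlib Require Import List Classical.
Import ListNotations.

Set Implicit Arguments.
Section Aux.
Variable S : signature.

Lemma eval_prod (A B : structure S) (w : nat -> dom (prod_structure A B)) t :
  eval_term (prod_structure A B) w t =
  (eval_term A (fun x => fst (w x)) t, eval_term B (fun x => snd (w x)) t).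
Proof. destruct t; simpl; [apply surjective_pairing | reflexivity]. Qed.

Lemma holds_proj (A B : structure S) (w : nat -> dom (prod_structure A B)) a :
  holds (prod_structure A B) w a ->
  holds A (fun x => fst (w x)) a /\ holds B (fun x => snd (w x)) a.
Proof.
  destruct a as [t1 t2 | r ts]; cbn [holds].
  - rewrite (eval_prod w t1), (eval_prod w t2). intro H. injection H. auto.
  - intros [H1 H2]. rewrite map_map in H1, H2. split.
    + erewrite map_ext; [exact H1|]. intro t. cbv beta. rewrite eval_prod. reflexivity.
    + erewrite map_ext; [exact H2|]. intro t. cbv beta. rewrite eval_prod. reflexivity.
Qed.

Lemma holds_pair (A B : structure S) (vA : nat -> dom A) (vB : nat -> dom B) a :
  holds A vA a -> holds B vB a ->
  holds (prod_structure A B) (fun x => (vA x, vB x) : dom (prod_structure A B)) a.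
Proof.
  destruct a as [t1 t2 | r ts]; cbn [holds].
  - intros E1 E2. rewrite !eval_prod. f_equal; assumption.
  - intros H1 H2. split; rewrite map_map.
    + erewrite map_ext; [exact H1|]. intro t. cbv beta. rewrite eval_prod. reflexivity.
    + erewrite map_ext; [exact H2|]. intro t. cbv beta. rewrite eval_prod. reflexivity.
Qed.

Lemma conj_proj (A B : structure S) w phi :
  holds_conj (prod_structure A B) w phi ->
  holds_conj A (fun x => fst (w x)) phi /\ holds_conj B (fun x => snd (w x)) phi.
Proof.
  intro H; split; intros a Ha; apply (@holds_proj A B w a (H a Ha)).
Qed.

Lemma conj_pair (A B : structure S) vA vB phi :
  holds_conj A vA phi -> holds_conj B vB phi ->
  holds_conj (prod_structure A B) (fun x => (vA x, vB x) : dom (prod_structure A B)) phi.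
Proof. intros H1 H2 a Ha. apply holds_pair; auto. Qed.

Lemma ED_prod (A B : structure S) d :
  is_ED d -> satisfies A d -> satisfies B d -> satisfies (prod_structure A B) d.
Proof.
  intros [_ Hl] HA HB v Hv.
  destruct (conj_proj Hv) as [Hv1 Hv2].
  destruct (HA _ Hv1) as [vA [agA [pA [InA hA]]]].
  destruct (HB _ Hv2) as [vB [agB [pB [InB hB]]]].
  exists (fun x => (vA x, vB x) : dom (prod_structure A B)). split.
  - intros x Hx. rewrite agA, agB by exact Hx. symmetry; apply surjective_pairing.
  - destruct (heads d) as [|h [|]]; simpl in Hl; try discriminate.
    destruct InA as [<-|[]]. destruct InB as [<-|[]].
    exists h. split; [left; reflexivity|]. apply conj_pair; auto.
Qed.

Definition restrict (d : dependency S) psi : dependency S :=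
  Dependency (uvars d) (evars d) (body d) [psi].

Lemma restrict_ED d psi : is_DED d -> In psi (heads d) -> is_ED (restrict d psi).
Proof.
  intros [[w1 [w2 [w3 [w4 w5]]]] [sf _]] Hin.
  split; [|reflexivity]. unfold restrict; simpl.
  split; [|split; [|discriminate]].
  - repeat split; simpl; auto.
    + intros p a [<-|[]] Ha. eauto.
    + intros p a x [<-|[]] Ha Hx. eauto.
  - intros p a x [<-|[]] Ha Hx Hu. eapply sf; eauto.
Qed.

Lemma restrict_sat A d psi : In psi (heads d) -> satisfies A (restrict d psi) -> satisfies A d.
Proof.
  intros Hin H v Hv. destruct (H v Hv) as [v' [ag [p [[<-|[]] hp]]]].
  exists v'; split; auto. exists psi; auto.
Qed.

Section Key.
Variable K : structure S -> Prop.
Hypothesis Kprod : forall A B, K A -> K B -> K (prod_structure A B).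
Variable Sigma : list (dependency S).
Hypothesis pres : forall A B, K A -> K B -> model A Sigma -> model B Sigma ->
  model (prod_structure A B) Sigma.
Variable d : dependency S.

Definition badL (L : list (list (atom S))) :=
  exists P, K P /\ model P Sigma /\ exists w : nat -> dom P,
    holds_conj P w (body d) /\
    forall psi, In psi L -> forall w', (forall x, ~ In x (evars d) -> w' x = w x) ->
      ~ holds_conj P w' psi.

Lemma badL_cons psi L : badL [psi] -> badL L -> badL (psi :: L).
Proof.
  intros [A [KA [MA [v [Hv Hn]]]]] [P [KP [MP [w [Hw Hw']]]]].
  exists (prod_structure A P). split; [auto|]. split; [auto|].
  exists (fun x => (v x, w x) : dom (prod_structure A P)). split.
  - apply conj_pair; auto.
  - intros p Hp w' ag Hh. destruct (conj_proj Hh) as [H1 H2].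
    destruct Hp as [->|Hp].
    + apply (Hn p (or_introl eq_refl) _ (fun x Hx => f_equal fst (ag x Hx)) H1).
    + apply (Hw' p Hp _ (fun x Hx => f_equal snd (ag x Hx)) H2).
Qed.

Lemma badL_all L : L <> [] -> (forall psi, In psi L -> badL [psi]) -> badL L.
Proof.
  induction L as [|psi L IH]; intros Hne H; [congruence|].
  destruct L as [|psi' L].
  - apply H; left; auto.
  - apply badL_cons; [apply H; left; auto|]. apply IH; [discriminate|].
    intros p Hp; apply H; right; auto.
Qed.

Lemma key : In d Sigma -> heads d <> [] ->
  exists psi, In psi (heads d) /\
    forall A, K A -> model A Sigma -> satisfies A (restrict d psi).
Proof.
  intros Hd Hne. apply NNPP; intro H.
  assert (Hb : badL (heads d)).
  { apply badL_all; auto. intros psi Hpsi. apply NNPP; intro Hnb.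
    apply H; exists psi; split; auto.
    intros A KA MA v Hv. apply NNPP; intro Hns. apply Hnb.
    exists A; split; auto; split; auto. exists v; split; auto.
    intros p [<-|[]] v' ag Hh. apply Hns. exists v'; split; auto.
    exists psi; split; [left; reflexivity | exact Hh]. }
  destruct Hb as [P [KP [MP [w [Hw Hn]]]]].
  destruct (MP d Hd w Hw) as [w' [ag [p [Hp Hh]]]].
  exact (Hn p Hp w' ag Hh).
Qed.

Lemma build : (forall d, In d Sigma -> is_DED d) ->
  (forall A B, K A -> K B -> model A Sigma -> model B Sigma -> model (prod_structure A B) Sigma) ->
  True.
Proof. auto. Qed.
End Key.

Lemma choose_list (K : structure S -> Prop) (Kprod : forall A B, K A -> K B -> K (prod_structure A B))
  (Sigma : list (dependency S)) :
  (forall d, In d Sigma -> is_DED d) ->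
  (forall A B, K A -> K B -> model A Sigma -> model B Sigma -> model (prod_structure A B) Sigma) ->
  forall L, (forall d, In d L -> In d Sigma) ->
  exists L', (forall d', In d' L' -> is_ED d' /\ forall A, K A -> model A Sigma -> satisfies A d') /\
    (forall d, In d L -> exists psi, In psi (heads d) /\ In (restrict d psi) L').
Proof.
  intros HD Hp. induction L as [|d L IH]; intros Hsub.
  - exists []; split; simpl; tauto.
  - destruct IH as [L' [H1 H2]]; [intros; apply Hsub; right; auto|].
    assert (Hd : In d Sigma) by (apply Hsub; left; auto).
    destruct (@key K Kprod Sigma Hp d Hd (proj2 (proj2 (HD d Hd)))) as [psi [Hpsi Hs]].
    exists (restrict d psi :: L'). split.
    + intros d' [<-|Hd']; auto. split; auto. apply restrict_ED; auto.
    + intros d0 [<-|Hd0].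
      * exists psi; split; auto. left; auto.
      * destruct (H2 d0 Hd0) as [p [Hp1 Hp2]]. exists p; split; auto. right; auto.
Qed.

Lemma fin_prod (A B : structure S) : finite_structure A -> finite_structure B ->
  finite_structure (prod_structure A B).
Proof.
  intros [lA HA] [lB HB]. exists (list_prod lA lB). intros [a b].
  apply in_prod; auto.
Qed.

End Aux.

Theorem theorem3 (S : signature) (Sigma : list (dependency S)) :
  (forall d, In d Sigma -> is_DED d) ->
  ((exists Sigma' : list (dependency S),
       (forall d, In d Sigma' -> is_ED d) /\ equivalent Sigma Sigma')
     <-> preserved_under_products Sigma) /\
  ((exists Sigma' : list (dependency S),
       (forall d, In d Sigma' -> is_ED d) /\ fin_equivalent Sigma Sigma')
     <-> preserved_under_products_fin Sigma).
Proof.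
  intros HD. split; split.
  - intros [S' [HE Heq]] A B MA MB. apply Heq. apply Heq in MA. apply Heq in MB.
    intros d Hd. apply ED_prod; auto.
  - intro Hp.
    destruct (@choose_list S (fun _ => True) (fun _ _ _ _ => I) Sigma HD
                (fun A B _ _ => Hp A B) Sigma (fun d h => h)) as [L' [H1 H2]].
    exists L'. split; [intros d Hd; apply (H1 d Hd)|].
    intros A; split.
    + intros MA d Hd. apply (proj2 (H1 d Hd)); auto.
    + intros MA d Hd. destruct (H2 d Hd) as [psi [Hpsi Hin]].
      apply (restrict_sat Hpsi). apply MA; auto.
  - intros [S' [HE Heq]] A B FA FB MA MB.
    apply Heq; [apply fin_prod; auto|]. apply Heq in MA; auto. apply Heq in MB; auto.
    intros d Hd. apply ED_prod; auto.
  - intro Hp.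
    destruct (@choose_list S finite_structure (@fin_prod S) Sigma HD
                Hp Sigma (fun d h => h)) as [L' [H1 H2]].
    exists L'. split; [intros d Hd; apply (H1 d Hd)|].
    intros A FA; split.
    + intros MA d Hd. apply (proj2 (H1 d Hd)); auto.
    + intros MA d Hd. destruct (H2 d Hd) as [psi [Hpsi Hin]].
      apply (restrict_sat Hpsi). apply MA; auto.
Qed.
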